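(* Fix $s,s'\in S$ and $a\in Act(s)$ with interface function $I_{s,a}$. Let $(\omega_1,\dots,\omega_M)\in\Omega^M$ be $M\in\mathbb{N}$ i.i.d. samples from $\mathbb{P}$, let $F_i=F(\mathcal{T}^{-1}(s),a,\omega_i)$, and define $$\check M=|\{i\in\{1,\dots,M\}: F_i\subseteq\mathcal{T}^{-1}(s')\}|,\qquad \hat M=|\{i\in\{1,\dots,M\}: F_i\cap\mathcal{T}^{-1}(s')\ne\emptyset\}|.$$ For $\beta\in(0,1)$ let $\check P_{lb}=0$ if $\check M=0$, and otherwise let $\check P_{lb}$ be the solution of $\frac{\beta}{2}=\sum_{\ell=\check M}^{M}\binom{M}{\ell}\check P_{lb}^{\ell}(1-\check P_{lb})^{M-\ell}$; let $\hat P_{ub}=1$ if $\hat M=M$, and otherwise let $\hat P_{ub}$ be the solution of $\frac{\beta}{2}=\sum_{\ell=0}^{\hat M}\binom{M}{\ell}\hat P_{ub}^{\ell}(1-\hat P_{ub})^{M-\ell}$. Then $$\mathbb{P}^M\Big\{(\omega_1,\dots,\omega_M)\in\Omega^M:\ \check P_{lb}\le\check p(s,a,s')\ \wedge\ \hat p(s,a,s')\le\hat P_{ub}\Big\}\ge 1-\beta.$$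
   Context: System: $x_{k+1}=f(x_k,u_k,\eta_k)$ with $x_k\in\mathcal{X}\subset\mathbb{R}^n$ compact, $u_k\in\mathcal{U}\subseteq\mathbb{R}^m$, $\eta_k:\Omega\to\mathcal{W}\subseteq\mathbb{R}^p$ i.i.d. on $(\Omega,\mathcal{F},\mathbb{P})$, $f:\mathcal{X}\times\mathcal{U}\times\mathcal{W}\to\mathcal{X}$; $\eta(\omega)$ denotes a noise realisation. $\mathcal{X}$ is partitioned into disjoint convex polytopes $R_1,\dots,R_v$, $R_\star=\mathbb{R}^n\setminus\mathcal{X}$, abstract states $S=\{s_1,\dots,s_v,s_\star\}$, abstraction map $\mathcal{T}:\mathbb{R}^n\to S$ with $\mathcal{T}(x)=s_i\iff x\in R_i$, $\mathcal{T}^{-1}(s)$ the region of $s$. $\bar{\mathbf u}=\{\bar u_1,\dots,\bar u_J\}\subset\mathcal{U}$ is a finite set of representative inputs; $Act$ is a finite action set with enabled actions $Act(s)$, and for $a\in Act(s)$ the interface function is $I_{s,a}:\mathcal{T}^{-1}(s)\to\bar{\mathbf u}$. Forward reachable set: $F(X,a,\omega)=\{f(x,u,\eta(\omega)): x\in X,\ u=I_{\mathcal{T}(x),a}(x)\}$. For compact $X'$: $\psi(x,X',a)=\mathbb{P}\{\omega: f(x,I_{\mathcal{T}(x),a}(x),\eta(\omega))\in X'\}$, and $\check p(s,a,s')=\min_{x\in\mathcal{T}^{-1}(s)}\psi(x,\mathcal{T}^{-1}(s'),a)$, $\hat p(s,a,s')=\max_{x\in\mathcal{T}^{-1}(s)}\psi(x,\mathcal{T}^{-1}(s'),a)$.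 *)

(* Defs.v *)
From HB Require Import structures.
From mathcomp Require Import all_boot all_order all_algebra.
From mathcomp Require Import all_classical all_reals.
From mathcomp Require Import ereal topology matrix_topology normedtype sequences measure probability.
Set Implicit Arguments. Unset Strict Implicit. Unset Printing Implicit Defensive.
Import Order.TTheory GRing.Theory Num.Theory.
Local Open Scope classical_set_scope.
Local Open Scope ring_scope.

(* A (possibly not closed) convex polytope in R^n: a bounded set cut out by
   finitely many linear inequalities, each of which may be strict or not. *)
Definition convex_polytope (R : realType) (n : nat) (A : set 'rV[R]_n) : Prop :=
  (exists (k : nat) (a : 'I_k -> 'rV[R]_n) (b : 'I_k -> R) (strict : 'I_k -> bool),
      A = [set x | forall j : 'I_k,
             if strict j then \sum_(l < n) a j 0 l * x 0 l < b j
             else \sum_(l < n) a j 0 l * x 0 l <= b j]) /\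
  (exists r : R, forall x, A x -> forall i j, `|x i j| <= r).

(* Abstract states S = {s_1,...,s_v, s_star}: [Some i] is s_(i+1), [None] is s_star.
   The region T^{-1}(s) of an abstract state. *)
Definition region (R : realType) (n v : nat) (X : set 'rV[R]_n)
    (Rg : 'I_v -> set 'rV[R]_n) (s : option 'I_v) : set 'rV[R]_n :=
  match s with Some i => Rg i | None => ~` X end.

(* Forward reachable set F(T^{-1}(s), a, omega) for the interface function
   Is = I_{s,a} (note T(x) = s for x in T^{-1}(s)). *)
Definition reach_set (R : realType) (n m p : nat) (Omega : Type)
    (f : 'rV[R]_n -> 'rV[R]_m -> 'rV[R]_p -> 'rV[R]_n) (eta : Omega -> 'rV[R]_p)
    (Is : 'rV[R]_n -> 'rV[R]_m) (Xs : set 'rV[R]_n) (w : Omega) : set 'rV[R]_n :=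
  [set f x (Is x) (eta w) | x in Xs].

Definition psi (R : realType) (n m p : nat) (d : measure_display)
    (Omega : measurableType d) (P : probability Omega R)
    (f : 'rV[R]_n -> 'rV[R]_m -> 'rV[R]_p -> 'rV[R]_n) (eta : Omega -> 'rV[R]_p)
    (Is : 'rV[R]_n -> 'rV[R]_m) (X' : set 'rV[R]_n) (x : 'rV[R]_n) : \bar R :=
  P [set w | X' (f x (Is x) (eta w))].

(* check p = min over the region, hat p = max over the region (taken as
   inf / sup, which coincide with min / max whenever these are attained). *)
Definition p_check (R : realType) (n m p : nat) (d : measure_display)
    (Omega : measurableType d) (P : probability Omega R)
    (f : 'rV[R]_n -> 'rV[R]_m -> 'rV[R]_p -> 'rV[R]_n) (eta : Omega -> 'rV[R]_p)
    (Is : 'rV[R]_n -> 'rV[R]_m) (Xs X' : set 'rV[R]_n) : \bar R :=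
  ereal_inf [set psi P f eta Is X' x | x in Xs].

Definition p_hat (R : realType) (n m p : nat) (d : measure_display)
    (Omega : measurableType d) (P : probability Omega R)
    (f : 'rV[R]_n -> 'rV[R]_m -> 'rV[R]_p -> 'rV[R]_n) (eta : Omega -> 'rV[R]_p)
    (Is : 'rV[R]_n -> 'rV[R]_m) (Xs X' : set 'rV[R]_n) : \bar R :=
  ereal_sup [set psi P f eta Is X' x | x in Xs].

(* (omega_1,...,omega_M) are M i.i.d. samples from P, realised as random
   elements om i : Omega' -> Omega on a probability space (Omega', Q):
   their joint law is the product measure P^M (on all measurable rectangles). *)
Definition iid_samples (R : realType) (d d' : measure_display)
    (Omega : measurableType d) (Omega' : measurableType d')
    (P : probability Omega R) (Q : probability Omega' R) (M : nat)
    (om : 'I_M -> Omega' -> Omega) : Prop :=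
  (forall i, measurable_fun setT (om i)) /\
  (forall A : 'I_M -> set Omega, (forall i, measurable (A i)) ->
     Q (\bigcap_(i in [set: 'I_M]) (om i @^-1` A i)) = (\prod_(i < M) P (A i))%E).

(* The Clopper-Pearson-type lower bound: plb k is the check P_lb when the
   count check M equals k (0 if k = 0, otherwise the solution in [0,1] of
   beta/2 = sum_{l=k}^{M} C(M,l) p^l (1-p)^(M-l)). *)
Definition is_lower_bound_fun (R : realType) (M : nat) (beta : R) (plb : nat -> R) : Prop :=
  plb 0%N = 0 /\
  forall k : nat, (0 < k <= M)%N ->
    0 <= plb k <= 1 /\
    beta / 2 = \sum_(k <= l < M.+1) 'C(M, l)%:R * plb k ^+ l * (1 - plb k) ^+ (M - l).

(* pub k is hat P_ub when hat M equals k (1 if k = M, otherwise the solution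
   in [0,1] of beta/2 = sum_{l=0}^{k} C(M,l) p^l (1-p)^(M-l)). *)
Definition is_upper_bound_fun (R : realType) (M : nat) (beta : R) (pub : nat -> R) : Prop :=
  pub M = 1 /\
  forall k : nat, (k < M)%N ->
    0 <= pub k <= 1 /\
    beta / 2 = \sum_(0 <= l < k.+1) 'C(M, l)%:R * pub k ^+ l * (1 - pub k) ^+ (M - l).

(* Main.v *)
Require Import Defs.
From HB Require Import structures.
From mathcomp Require Import all_boot all_order all_algebra.
From mathcomp Require Import all_classical all_reals.
From mathcomp Require Import ereal topology matrix_topology normedtype sequences measure probability.
From mathcomp Require Import ring lra.
Import Order.TTheory GRing.Theory Num.Theory.
Local Open Scope classical_set_scope.
Local Open Scope ring_scope.
Section Binom.
Context {R : realFieldType}.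
Definition bn (M l : nat) (p : R) := 'C(M,l)%:R * p ^+ l * (1-p)^+(M-l).
Definition tl M k p := \sum_(k <= l < M.+1) bn M l p.
Definition hd M k p := \sum_(0 <= l < k.+1) bn M l p.

Lemma bn_ge0 M l p : 0 <= p <= 1 -> 0 <= bn M l p.
Proof.
move=> /andP[p0 p1]; rewrite /bn; apply: mulr_ge0; first apply: mulr_ge0 => //.
- exact: exprn_ge0.
- by apply: exprn_ge0; rewrite subr_ge0.
Qed.

Lemma tl0 M p : tl M 0 p = 1.
Proof.
transitivity (((1-p)+p)^+M); last by rewrite subrK expr1n.
rewrite /tl big_mkord exprDn.
apply: eq_bigr => i _; rewrite /bn -mulr_natl; ring.
Qed.

Lemma tl_rec M k p : tl M.+1 k.+1 p = p * tl M k p + (1 - p) * tl M k.+1 p.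
Proof.
rewrite /tl big_add1 /=.
have -> : \sum_(k <= i < M.+1) bn M.+1 i.+1 p =
   \sum_(k <= i < M.+1) (p * bn M i p) + \sum_(k <= i < M.+1) 'C(M, i.+1)%:R * p ^+ i.+1 * (1 - p) ^+ (M - i).
  rewrite -big_split /=; apply: eq_bigr => i _.
  by rewrite /bn binS natrD subSS exprS; ring.
rewrite -mulr_sumr; congr (_ + _).
rewrite mulr_sumr.
have [kM|Mk] := leqP k M; last first.
  by rewrite !big_geq // ltnW.
rewrite big_nat_recr //= bin_small // mul0r mul0r addr0.
rewrite [in RHS]big_add1 /=.
rewrite big_nat_cond [in RHS]big_nat_cond.
apply: eq_bigr => i /andP[/andP[_ iM] _]; rewrite /bn.
by rewrite -(subnSK iM) exprS [(1-p)^+(M - i.+1).+1]exprS; ring.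
Qed.

Lemma tl_ge0 M k p : 0 <= p <= 1 -> 0 <= tl M k p.
Proof. by move=> hp; rewrite /tl; apply: sumr_ge0 => i _; exact: bn_ge0. Qed.

Lemma tl_step M k p : 0 <= p <= 1 -> tl M k.+1 p <= tl M k p.
Proof.
move=> hp; rewrite /tl; have [kM|Mk] := leqP k M.
  by rewrite [X in _ <= X]big_ltn ?ltnS // lerDr bn_ge0.
by rewrite !big_geq // ltnW.
Qed.

Lemma tl_mono M k p p' : 0 <= p -> p <= p' -> p' <= 1 -> tl M k p <= tl M k p'.
Proof.
move=> p0 pp' p'1.
have hp : 0 <= p <= 1 by apply/andP; split => //; exact: le_trans p'1.
have hp' : 0 <= p' <= 1 by apply/andP; split => //; exact: le_trans pp'.
elim: M k => [|M IH] [|k]; rewrite ?tl0 //.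
  by rewrite /tl !big_geq.
rewrite !tl_rec.
have h1 := IH k; have h2 := IH k.+1.
have h3 := @tl_step M k p hp.
have h4 := @tl_ge0 M k p hp; have h5 := @tl_ge0 M k.+1 p hp.
nra.
Qed.

Lemma hd_tl M k p : (k < M)%N -> hd M k p = 1 - tl M k.+1 p.
Proof.
move=> kM; rewrite -(tl0 M p) /tl /hd (@big_cat_nat _ _ _ k.+1 0 M.+1) //=; last by rewrite ltnS ltnW.
by rewrite addrK.
Qed.

Lemma hd_anti M k p p' : (k < M)%N -> 0 <= p -> p <= p' -> p' <= 1 -> hd M k p' <= hd M k p.
Proof.
move=> kM p0 pp' p'1; rewrite !hd_tl // lerD2l lerN2; exact: tl_mono.
Qed.
End Binom.

Lemma lowL (R : realType) M (beta : R) plb q : is_lower_bound_fun M beta plb -> 0 <= beta ->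
  0 <= q <= 1 -> \sum_(j < M.+1 | q < plb j) bn M j q <= beta / 2.
Proof.
case=> h0 hk b0 hq.
case: (pselect (exists j : nat, (j < M.+1)%N && (q < plb j))) => [ex|nex]; last first.
  rewrite big1 ?divr_ge0 // => j hj; exfalso; apply: nex; exists j; rewrite ltn_ord.
  exact: hj.
case: (ex_minnP ex) => k /andP[kM qk] kmin.
have k0 : (0 < k)%N.
  case: k {kM kmin} qk => // ; rewrite h0 => q0; move/andP: hq => [hq _]; lra.
have hk' := hk k; rewrite k0 -ltnS kM in hk'; case: (hk' isT) => /andP[pl0 pl1] ->.
apply: (@le_trans _ _ (tl M k q)).
  rewrite /tl big_geq_mkord [X in _ <= X]big_mkcond [X in X <= _]big_mkcond /=.
  apply: ler_sum => j _; case: ifP => h.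
    by rewrite (kmin j) // ltn_ord h.
  by case: ifP => // _; apply: bn_ge0.
rewrite /tl; apply: (@tl_mono _ M k q (plb k)) => //.
- by case/andP: hq.
- exact: ltW.
Qed.

Lemma upU (R : realType) M (beta : R) pub q : is_upper_bound_fun M beta pub -> 0 <= beta ->
  0 <= q <= 1 -> \sum_(j < M.+1 | pub j < q) bn M j q <= beta / 2.
Proof.
case=> h0 hk b0 hq.
case: (pselect (exists j : nat, (j < M.+1)%N && (pub j < q))) => [ex|nex]; last first.
  rewrite big1 ?divr_ge0 // => j hj; exfalso; apply: nex; exists j; rewrite ltn_ord.
  exact: hj.
have ub : forall j, (j < M.+1)%N && (pub j < q) -> (j <= M)%N by move=> j /andP[].
case: (ex_maxnP ex ub) => k /andP[kM qk] kmax.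
have kltM : (k < M)%N.
  rewrite ltn_neqAle -ltnS kM andbT; apply/eqP => ekM; move: qk; rewrite ekM h0.
  move/andP: hq => [_ hq] q1; lra.
case: (hk k kltM) => /andP[pl0 pl1] ->.
apply: (@le_trans _ _ (hd M k q)).
  rewrite /hd (@big_nat_widen _ _ _ 0 k.+1 M.+1) // big_mkord.
  rewrite [X in _ <= X]big_mkcond [X in X <= _]big_mkcond /=.
  apply: ler_sum => j _; case: ifP => h.
    by rewrite ltnS (kmax j) // ltn_ord h.
  by case: ifP => // _; apply: bn_ge0.
rewrite /hd; apply: (@hd_anti _ M k (pub k) q) => //.
- exact: ltW.
- by case/andP: hq.
Qed.

Section Event.
Context (R : realType) (d : measure_display) (Omega : measurableType d) (P : probability Omega R)
  (M : nat) (d' : measure_display) (Omega' : measurableType d') (Q : probability Omega' R)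
  (om : 'I_M -> Omega' -> Omega) (hiid : iid_samples P Q om) (A : set Omega) (mA : measurable A).

Let q := fine (P A).
Let PAq : P A = q%:E.
Proof. by rewrite /q fineK // fin_num_measure. Qed.

Let SA (o : Omega') := [set i : 'I_M | `[< A (om i o) >]]%SET.
Let Rect (S : {set 'I_M}) :=
  \bigcap_(i in [set: 'I_M]) (om i @^-1` (if i \in S then A else ~` A)).

Let mRect S : measurable (Rect S).
Proof.
apply: fin_bigcap_measurable; first exact: finite_finset.
move=> i _; have := hiid.1 i measurableT (if i \in S then A else ~` A).
rewrite setTI; apply; case: ifP => _ //; exact: measurableC.
Qed.

Let QRect S : Q (Rect S) = (q ^+ #|S| * (1 - q) ^+ (M - #|S|))%:E.
Proof.
rewrite /Rect hiid.2; last by move=> i; case: ifP => _ //; exact: measurableC.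
transitivity (\prod_(i < M) (if i \in S then q else 1 - q)%:E)%E.
  apply: eq_bigr => i _; case: ifP => _; first by rewrite PAq.
  by rewrite probability_setC // PAq.
rewrite prodEFin; congr (_%:E).
rewrite (bigID (mem S)) /=; congr (_ * _).
  rewrite (eq_bigr (fun=> q)); last by move=> i ->.
  by rewrite prodr_const.
rewrite (eq_bigr (fun=> 1 - q)); last by move=> i /negbTE ->.
rewrite prodr_const; congr (_ ^+ _).
have hc : (#|S| + #|~: S| = M)%N by rewrite cardsC card_ord.
rewrite -[RHS](f_equal (subn^~ #|S|) hc) addKn.
by apply: eq_card => i; rewrite !inE.
Qed.

Let RS S o : Rect S o -> S = SA o.
Proof.
move=> Ro; apply/setP => i; rewrite inE.
have := Ro i I; rewrite /preimage /=; case: ifP => iS h.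
  by apply/esym/asboolP.
by apply/esym/negbTE/asboolPn.
Qed.

Let SR o : Rect (SA o) o.
Proof.
move=> i _; rewrite /preimage /= inE.
by case: (pselect (A (om i o))) => h; [rewrite asboolT | rewrite asboolF].
Qed.

Let evE (C : pred nat) :
  [set o | C #|[set i : 'I_M | `[< A (om i o) >]]| ] =
  \bigcup_(S in [set` (fun S : {set 'I_M} => C #|S|) : {pred {set 'I_M}}]) Rect S.
Proof.
have -> : [set o | C #|[set i : 'I_M | `[< A (om i o) >]]| ] =
          [set o | C #|SA o| ].
  apply/seteqP; split => o /=; (suff -> : #|[set i : 'I_M | `[< A (om i o) >]]| = #|SA o| by []);
  apply: eq_card => i; rewrite /SA [RHS]inE; apply/idP/idP => [/set_mem|h] //; exact: mem_set.
apply/seteqP; split => o.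
  move=> Co; exists (SA o) => //.
by move=> [S] CS /RS eS; rewrite /= -eS.
Qed.

Lemma binom_meas (C : pred nat) :
  measurable [set o | C #|[set i : 'I_M | `[< A (om i o) >]]| ].
Proof.
rewrite evE; apply: fin_bigcup_measurable; first exact: finite_finset.
by move=> S _; apply: mRect.
Qed.

Lemma binom_event (C : pred nat) :
  Q [set o | C #|[set i : 'I_M | `[< A (om i o) >]]| ] =
  (\sum_(j < M.+1 | C j) bn M j q)%:E.
Proof.
rewrite evE; set pC := (X in [set` X]).
rewrite measure_fin_bigcup; first last.
- by move=> S _; apply: mRect.
- by move=> S S' _ _ [o [/RS -> /RS ->]].
- exact: finite_finset.
rewrite (eq_fsbigr (fun S : {set 'I_M} => (q ^+ #|S| * (1 - q) ^+ (M - #|S|))%:E)); last first.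
  by move=> S _; exact: QRect.
rewrite fsumEFin; last exact: finite_finset.
congr (_%:E).
rewrite -(@bigfs _ _ _ _ (index_enum {set 'I_M})); last (by move=> S _; rewrite mem_index_enum); last exact: index_enum_uniq.
have cardM : forall S : {set 'I_M}, (#|S| < M.+1)%N.
  by move=> S; rewrite ltnS; apply: leq_trans (max_card _) _; rewrite card_ord.
rewrite (partition_big (fun S : {set 'I_M} => inord #|S| : 'I_M.+1) (fun j : 'I_M.+1 => C j)) /=; last first.
  by move=> S; rewrite /pC inordK.
apply: eq_bigr => j Cj.
rewrite (eq_bigl (fun S => S \in [set S : {set 'I_M} | #|S| == j]%SET)); last first.
  move=> S /=; rewrite inE -(inj_eq val_inj) /= inordK //.
  by rewrite /pC; case: eqP => [->|]; [rewrite Cj | rewrite andbF].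
rewrite (eq_bigr (fun=> q ^+ j * (1 - q) ^+ (M - j))); last by move=> S; rewrite inE => /eqP ->.
by rewrite sumr_const card_draws card_ord /bn -mulr_natl; ring.
Qed.
End Event.
Theorem theorem2
  (R : realType) (n m p v : nat)
  (* state space, inputs, noise space, dynamics *)
  (X : set 'rV[R]_n) (U : set 'rV[R]_m) (W : set 'rV[R]_p)
  (f : 'rV[R]_n -> 'rV[R]_m -> 'rV[R]_p -> 'rV[R]_n)
  (hX : @compact 'rV[R^o]_n X)
  (hf : forall x u w, X x -> U u -> W w -> X (f x u w))
  (* partition of X into disjoint convex polytopes R_1,...,R_v *)
  (Rg : 'I_v -> set 'rV[R]_n)
  (hRpoly : forall i, convex_polytope (Rg i))
  (hRne : forall i, Rg i !=set0)
  (hRdisj : forall i j, i != j -> Rg i `&` Rg j = set0)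
  (hRcover : \bigcup_(i in [set: 'I_v]) Rg i = X)
  (* representative inputs, actions, interface functions *)
  (ubar : seq 'rV[R]_m) (hubar : forall u, u \in ubar -> U u)
  (Act : finType) (ActEn : option 'I_v -> {set Act})
  (I : option 'I_v -> Act -> 'rV[R]_n -> 'rV[R]_m)
  (hI : forall s a x, a \in ActEn s -> region X Rg s x -> I s a x \in ubar)
  (* noise *)
  (d : measure_display) (Omega : measurableType d) (P : probability Omega R)
  (eta : Omega -> 'rV[R]_p) (heta : forall w, W (eta w))
  (* fixed s, s', a in Act(s) *)
  (s : 'I_v) (s' : option 'I_v) (a : Act) (ha : a \in ActEn (Some s))
  (* well-posedness: the events used are measurable *)
  (hpsi_meas : forall x, region X Rg (Some s) x ->
     measurable [set w | region X Rg s' (f x (I (Some s) a x) (eta w))])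
  (hsub_meas : measurable
     [set w | reach_set f eta (I (Some s) a) (region X Rg (Some s)) w `<=` region X Rg s'])
  (hmeet_meas : measurable
     [set w | reach_set f eta (I (Some s) a) (region X Rg (Some s)) w `&` region X Rg s' !=set0])
  (* M i.i.d. samples *)
  (M : nat) (d' : measure_display) (Omega' : measurableType d')
  (Q : probability Omega' R) (om : 'I_M -> Omega' -> Omega)
  (hiid : iid_samples P Q om)
  (* confidence level and the bounds *)
  (beta : R) (hbeta : 0 < beta < 1)
  (plb pub : nat -> R)
  (hplb : is_lower_bound_fun M beta plb)
  (hpub : is_upper_bound_fun M beta pub) :
  let F := fun (i : 'I_M) (o : Omega') =>
    reach_set f eta (I (Some s) a) (region X Rg (Some s)) (om i o) in
  let Mcheck := fun o : Omega' =>
    #|[set i : 'I_M | `[< F i o `<=` region X Rg s' >]]| in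
  let Mhat := fun o : Omega' =>
    #|[set i : 'I_M | `[< F i o `&` region X Rg s' !=set0 >]]| in
  ((1 - beta)%:E <=
   Q [set o | ((plb (Mcheck o))%:E <=
                 p_check P f eta (I (Some s) a) (region X Rg (Some s)) (region X Rg s'))%E
            /\ (p_hat P f eta (I (Some s) a) (region X Rg (Some s)) (region X Rg s')
                 <= (pub (Mhat o))%:E)%E])%E.
Proof.
cbv zeta.
move/andP: hbeta => [b0 b1].
set A := [set w | reach_set f eta (I (Some s) a) (region X Rg (Some s)) w `<=` region X Rg s'].
set B := [set w | reach_set f eta (I (Some s) a) (region X Rg (Some s)) w `&` region X Rg s' !=set0].
have mA : measurable A by exact: hsub_meas.
have mB : measurable B by exact: hmeet_meas.
set qA := fine (P A); set qB := fine (P B).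
have PA : P A = qA%:E by rewrite /qA fineK // fin_num_measure.
have PB : P B = qB%:E by rewrite /qB fineK // fin_num_measure.
have hqA : 0 <= qA <= 1.
  by rewrite -!lee_fin -PA measure_ge0 probability_le1.
have hqB : 0 <= qB <= 1.
  by rewrite -!lee_fin -PB measure_ge0 probability_le1.
set pc := p_check _ _ _ _ _ _.
set ph := p_hat _ _ _ _ _ _.
have pcA : (qA%:E <= pc)%E.
  apply: le_ereal_inf_tmp => _ [x Rx <-]; rewrite -PA /psi.
  apply: le_measure; rewrite ?inE //; first exact: hpsi_meas.
  by move=> w Aw; apply: Aw; exists x.
have phB : (ph <= qB%:E)%E.
  apply: ge_ereal_sup => _ [x Rx <-]; rewrite -PB /psi.
  apply: le_measure; rewrite ?inE //; first exact: hpsi_meas.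
  by move=> w hw; exists (f x (I (Some s) a x) (eta w)); split => //; exists x.
pose C1 : pred nat := fun j => qA < plb j.
pose C2 : pred nat := fun j => pub j < qB.
pose Cg1 : pred nat := fun j => ((plb j)%:E <= pc)%E.
pose Cg2 : pred nat := fun j => (ph <= (pub j)%:E)%E.
pose nC1 : pred nat := fun j => ~~ C1 j.
pose nC2 : pred nat := fun j => ~~ C2 j.
pose EV (Z : set Omega) (C : pred nat) := [set o | C #|[set i : 'I_M | `[< Z (om i o) >]]| ].
have mEV : forall Z C, measurable Z -> measurable (EV Z C).
  by move=> Z C mZ; apply: (@binom_meas _ _ _ P M _ _ Q om hiid Z mZ C).
have QEV : forall Z C, measurable Z -> Q (EV Z C) = (\sum_(j < M.+1 | C j) bn M j (fine (P Z)))%:E.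
  by move=> Z C mZ; apply: (@binom_event _ _ _ P M _ _ Q om hiid Z mZ C).
change ((1 - beta)%:E <= Q (EV A Cg1 `&` EV B Cg2))%E.
have mG : measurable (EV A Cg1 `&` EV B Cg2) by apply: measurableI; apply: mEV.
have mG' : measurable (EV A nC1 `&` EV B nC2) by apply: measurableI; apply: mEV.
apply: (@le_trans _ _ (Q (EV A nC1 `&` EV B nC2))); last first.
  apply: le_measure; rewrite ?inE //.
  move=> o [h1 h2]; split.
    rewrite /EV /= /Cg1; apply: le_trans pcA; rewrite lee_fin.
    by move: h1; rewrite /EV /= /nC1 /C1 -leNgt.
  rewrite /EV /= /Cg2; apply: le_trans phB _; rewrite lee_fin.
  by move: h2; rewrite /EV /= /nC2 /C2 -leNgt.
have hsub : ~` (EV A nC1 `&` EV B nC2) `<=` EV A C1 `|` EV B C2.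
  move=> o /= /not_andP [] h; [left|right]; move: h; rewrite /EV /= ?/nC1 ?/nC2;
  by move/negP; rewrite negbK.
have hU := measureU2 Q (mEV A C1 mA) (mEV B C2 mB).
have hle := le_measure Q (mem_set (measurableC mG')) (mem_set (measurableU _ _ (mEV A C1 mA) (mEV B C2 mB))) hsub.
have s1 := @lowL _ M beta plb qA hplb (ltW b0) hqA.
have s2 := @upU _ M beta pub qB hpub (ltW b0) hqB.
have h3 : (1 - Q (EV A nC1 `&` EV B nC2) <=
   (\sum_(j < M.+1 | C1 j) bn M j qA + \sum_(j < M.+1 | C2 j) bn M j qB)%:E)%E.
  rewrite EFinD -(QEV A C1 mA) -(QEV B C2 mB) -probability_setC //.
  exact: le_trans hle hU.
move: h3; have := fin_num_measure Q _ mG'.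
case: (Q (EV A nC1 `&` EV B nC2)) => [g _| |] //; last by move=> _ _; rewrite leey.
rewrite -EFinB !lee_fin => h1.
have := le_trans h1 (lerD s1 s2); lra.
Qed.
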